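(* Let $F$ be a field of characteristic not $2$, let $a\in F^*$ be a non-square, and let $L=F(\sqrt{a})$. Then $(F^{(4)}\cap L^{(3)})/F$ is a Galois extension.
   Context: All fields are taken inside a fixed quadratic closure $F_q$ of $F$. For a field $K$ of characteristic not $2$, define $K^{(1)}=K$ and, for $n\ge 1$, $K^{(n+1)}$ is the compositum of all quadratic extensions of $K^{(n)}$ which are Galois over $K$. *)

(* Defs.v *)
From HB Require Import structures.
From mathcomp Require Import all_boot all_order all_algebra.
Set Implicit Arguments. Unset Strict Implicit. Unset Printing Implicit Defensive.
Import GRing.Theory.
Local Open Scope ring_scope.

Section Defs.
Variable Om : fieldType.

Definition is_subfield (K : Om -> Prop) : Prop :=
  [/\ K 0, K 1, (forall x y, K x -> K y -> K (x - y)),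
      (forall x y, K x -> K y -> K (x * y)) & (forall x, K x -> K x^-1)].

Definition generated (S : Om -> Prop) : Om -> Prop :=
  fun x => forall K, is_subfield K -> (forall y, S y -> K y) -> K x.

Definition adjoin (K : Om -> Prop) (s : Om) : Om -> Prop :=
  generated (fun x => K x \/ x = s).

Definition is_quadratic_closure (F : Om -> Prop) : Prop :=
  (forall x : Om, exists y, y * y = x) /\
  (forall K, is_subfield K -> (forall x, F x -> K x) ->
     (forall x, K x -> exists y, K y /\ y * y = x) -> forall x, K x).

Definition is_minpoly (K : Om -> Prop) (x : Om) (p : {poly Om}) : Prop :=
  [/\ p \is monic, (forall i, K p`_i), root p x &
      forall q : {poly Om}, (forall i, K q`_i) -> q != 0 -> root q x ->
        (size p <= size q)%N].

(* M / K is a Galois extension (algebraic, normal, separable): M is a field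
   containing K and the minimal polynomial over K of every element of M
   splits over M into distinct linear factors. *)
Definition galois_ext (K M : Om -> Prop) : Prop :=
  [/\ is_subfield K, is_subfield M, (forall x, K x -> M x) &
      forall x, M x -> exists p, is_minpoly K x p /\
        exists rs : seq Om, [/\ uniq rs, (forall r, r \in rs -> M r) &
                               p = \prod_(r <- rs) ('X - r%:P)]].

Definition quad_ext (K M : Om -> Prop) : Prop :=
  [/\ is_subfield M, (forall x, K x -> M x) &
      exists y, [/\ M y, ~ K y &
        forall z, M z -> exists u v, [/\ K u, K v & z = u + v * y]]].

Definition next_step (K Kn : Om -> Prop) : Om -> Prop :=
  generated (fun x => Kn x \/ exists M, [/\ quad_ext Kn M, galois_ext K M & M x]).

(* higher K n = K^{(n+1)} (so higher K 0 = K^{(1)} = K) *)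
Fixpoint higher (K : Om -> Prop) (n : nat) : Om -> Prop :=
  match n with
  | O => K
  | S m => next_step K (higher K m)
  end.
End Defs.

(* Main.v *)
Require Import Defs.
From mathcomp Require Import all_boot all_order all_algebra.
From Stdlib Require Import ClassicalEpsilon.
From mathcomp Require Import ring.
Set Implicit Arguments. Unset Strict Implicit. Unset Printing Implicit Defensive.
Import GRing.Theory.
Local Open Scope ring_scope.

Section Gen.
Variable Om : fieldType.
Implicit Types (K B E S : Om -> Prop) (x y z : Om).

Lemma sf0 K : is_subfield K -> K 0. Proof. by case. Qed.
Lemma sf1 K : is_subfield K -> K 1. Proof. by case. Qed.
Lemma sfB K x y : is_subfield K -> K x -> K y -> K (x - y). Proof. by case=> _ _ h _ _; apply: h. Qed.
Lemma sfM K x y : is_subfield K -> K x -> K y -> K (x * y). Proof. by case=> _ _ _ h _; apply: h. Qed.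
Lemma sfV K x : is_subfield K -> K x -> K x^-1. Proof. by case=> _ _ _ _ h; apply: h. Qed.
Lemma sfN K x : is_subfield K -> K x -> K (- x).
Proof. by move=> hK kx; rewrite -sub0r; apply: sfB => //; apply: sf0. Qed.
Lemma sfD K x y : is_subfield K -> K x -> K y -> K (x + y).
Proof. by move=> hK kx ky; rewrite -[y]opprK; apply: sfB => //; apply: sfN. Qed.
Lemma sfX K x n : is_subfield K -> K x -> K (x ^+ n).
Proof. move=> hK kx; elim: n => [|n IH]; first by rewrite expr0; apply: sf1.
by rewrite exprS; apply: sfM. Qed.
Lemma sfn K n : is_subfield K -> K n%:R.
Proof. move=> hK; elim: n => [|n IH]; first by apply: sf0.
by rewrite -addn1 natrD; apply: sfD => //; apply: sf1. Qed.

Lemma gen_sub S : is_subfield (generated S).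
Proof.
split.
- by move=> K hK _; apply: sf0.
- by move=> K hK _; apply: sf1.
- by move=> x y hx hy K hK hS; apply: sfB => //; [apply: hx | apply: hy].
- by move=> x y hx hy K hK hS; apply: sfM => //; [apply: hx | apply: hy].
- by move=> x hx K hK hS; apply: sfV => //; apply: hx.
Qed.
Lemma gen_incl S x : S x -> generated S x.
Proof. by move=> hx K _ hS; apply: hS. Qed.
Lemma gen_min S K : is_subfield K -> (forall y, S y -> K y) ->
  forall x, generated S x -> K x.
Proof. by move=> hK hS x hx; apply: hx. Qed.
Lemma gen_mono S S' : (forall y, S y -> S' y) ->
  forall x, generated S x -> generated S' x.
Proof.
move=> h x hx; apply: (gen_min (gen_sub S')) hx => y /h; exact: gen_incl.
Qed.

Lemma sfI K K' : is_subfield K -> is_subfield K' -> is_subfield (fun x => K x /\ K' x).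
Proof.
move=> h h'; split.
- by split; apply: sf0.
- by split; apply: sf1.
- by move=> x y [? ?] [? ?]; split; apply: sfB.
- by move=> x y [? ?] [? ?]; split; apply: sfM.
- by move=> x [? ?]; split; apply: sfV.
Qed.

Lemma adjoin_sub K z : is_subfield (adjoin K z). Proof. exact: gen_sub. Qed.
Lemma adjoin_base K z x : K x -> adjoin K z x.
Proof. by move=> kx; apply: gen_incl; left. Qed.
Lemma adjoin_z K z : adjoin K z z.
Proof. by apply: gen_incl; right. Qed.
Lemma adjoin_min K z E : is_subfield E -> (forall x, K x -> E x) -> E z ->
  forall x, adjoin K z x -> E x.
Proof. by move=> hE hK hz; apply: gen_min => // y [/hK|->]. Qed.

Lemma sq_eq x y : x * x = y * y -> x = y \/ x = - y.
Proof.
move=> h; have : (x - y) * (x + y) = 0 by rewrite mulrDr !mulrBl h; ring.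
move/eqP; rewrite mulf_eq0 => /orP[|] /eqP h'.
  by left; apply/eqP; rewrite -subr_eq0 h'.
by right; apply/eqP; rewrite -subr_eq0 opprK h'.
Qed.

Lemma adjoin_rep K z : is_subfield K -> K (z * z) ->
  forall x, adjoin K z x <-> exists u v, [/\ K u, K v & x = u + v * z].
Proof.
move=> hK hd x; split; last first.
  case=> u [v [ku kv ->]]; apply: (@sfD (adjoin K z)); first exact: adjoin_sub.
    exact: adjoin_base.
  by apply: (@sfM (adjoin K z)); [exact: adjoin_sub| exact: adjoin_base| exact: adjoin_z].
pose R := fun x => exists u v, [/\ K u, K v & x = u + v * z].
have R0 k : K k -> R k by move=> kk; exists k, 0; split => //; [exact: sf0| ring].
have hz : R z by exists 0, 1; split; [exact: sf0| exact: sf1| ring].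
suff hR : is_subfield R by move=> hx; apply: (adjoin_min hR R0 hz hx).
split.
- by apply: R0; apply: sf0.
- by apply: R0; apply: sf1.
- move=> x1 y1 [u [v [ku kv ->]]] [u' [v' [ku' kv' ->]]].
  by exists (u - u'), (v - v'); split; try apply: sfB => //; ring.
- move=> x1 y1 [u [v [ku kv ->]]] [u' [v' [ku' kv' ->]]].
  exists (u * u' + v * v' * (z * z)), (u * v' + v * u'); split.
  + by apply: sfD => //; apply: sfM => //; apply: sfM.
  + by apply: sfD => //; apply: sfM.
  + ring.
- move=> x1 [u [v [ku kv ->]]].
  have [kz|nkz] := classic (K z).
    by apply: R0; apply: sfV => //; apply: sfD => //; apply: sfM.
  pose n := u * u - v * v * (z * z).
  have [n0|nn0] := eqVneq n 0.
    have v0 : v = 0.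
      have [//|v0] := eqVneq v 0; exfalso; apply: nkz.
      have : (u / v) * (u / v) = z * z.
        apply: (mulIf (_ : v * v != 0)); first by rewrite mulf_eq0 (negPf v0).
        move/eqP: n0; rewrite subr_eq0 => /eqP n0.
        have -> : u / v * (u / v) * (v * v) = u * u by field.
        by rewrite n0; ring.
      case/sq_eq => h; first by rewrite -h; apply: sfM => //; apply: sfV.
      have -> : z = - (u / v) by rewrite h opprK.
      by apply: sfN => //; apply: sfM => //; apply: sfV.
    have u0 : u = 0.
      by move: n0; rewrite /n v0 !mul0r subr0; move/eqP; rewrite mulf_eq0 orbb => /eqP.
    by rewrite u0 v0 mul0r addr0 invr0; apply: R0; apply: sf0.
  exists (u / n), (- v / n); split.
  + by apply: sfM => //; apply: sfV => //; rewrite /n; apply: sfB => //; apply: sfM => //; apply: sfM.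
  + apply: sfM => //; first by apply: sfN.
    by apply: sfV => //; rewrite /n; apply: sfB => //; apply: sfM => //; apply: sfM.
  + have w0 : u + v * z != 0.
      apply/negP=> /eqP h; have : n = 0 by rewrite /n -[u](addrK (v * z)) h; ring.
      by move/eqP; rewrite (negPf nn0).
    apply: (mulfI w0); rewrite mulfV //.
    move: nn0; rewrite /n => nn0; by field.
Qed.
End Gen.

Section Tower.
Variable Om : fieldType.
Implicit Types (K B E S T X Y : Om -> Prop) (x y z : Om).

Fixpoint tw B (zs : seq Om) : Om -> Prop :=
  if zs is z :: zs' then adjoin (tw B zs') z else B.
Fixpoint valid B (zs : seq Om) : Prop :=
  if zs is z :: zs' then valid B zs' /\ tw B zs' (z * z) else True.

Lemma tw_sub B zs : is_subfield B -> is_subfield (tw B zs).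
Proof. by move=> hB; case: zs => [|z zs] //=; apply: adjoin_sub. Qed.
Lemma tw_base B zs x : B x -> tw B zs x.
Proof. elim: zs x => [|z zs IH] x //= hx; apply: adjoin_base; exact: IH. Qed.
Lemma tw_cat B zs ys : tw B (zs ++ ys) = tw (tw B ys) zs.
Proof. by elim: zs => [|z zs IH] //=; rewrite IH. Qed.
Lemma tw_monoB B B' zs : (forall x, B x -> B' x) -> forall x, tw B zs x -> tw B' zs x.
Proof.
elim: zs => [|z zs IH] //= hBB' x; apply: gen_mono => y [/IH h|->]; [left|right] => //.
exact: h.
Qed.
Lemma valid_monoB B B' zs : (forall x, B x -> B' x) -> valid B zs -> valid B' zs.
Proof.
elim: zs => [|z zs IH] //= h [v1 v2]; split; first exact: IH.
exact: tw_monoB v2.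
Qed.
Lemma valid_cat B zs ys : valid B (zs ++ ys) <-> valid (tw B ys) zs /\ valid B ys.
Proof.
elim: zs => [|z zs IH] /=; first by split => // [[]].
rewrite tw_cat; split; first by case=> /IH [? ?] ?.
by case=> [[? ?] ?]; split => //; apply/IH.
Qed.
Lemma tw_mem B zs z : z \in zs -> tw B zs z.
Proof.
elim: zs => [|z' zs IH] //=; rewrite inE => /orP[/eqP->|/IH h].
  exact: adjoin_z.
exact: adjoin_base.
Qed.
Lemma tw_min B zs E : is_subfield E -> (forall x, B x -> E x) ->
  (forall z, z \in zs -> E z) -> forall x, tw B zs x -> E x.
Proof.
move=> hE; elim: zs => [|z zs IH] //= hB hz; apply: adjoin_min => //.
  by apply: IH => // z' hz'; apply: hz; rewrite inE hz' orbT.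
by apply: hz; rewrite inE eqxx.
Qed.
Lemma tw_catl B zs ys x : tw B ys x -> tw B (zs ++ ys) x.
Proof. by rewrite tw_cat; apply: tw_base. Qed.

Definition emb B E (s : Om -> Om) : Prop :=
  [/\ forall x, B x -> s x = x,
      forall x y, E x -> E y -> s (x + y) = s x + s y &
      forall x y, E x -> E y -> s (x * y) = s x * s y].

Section EmbTheory.
Variables (B E : Om -> Prop) (s : Om -> Om).
Hypotheses (hE : is_subfield E) (hB1 : B 1) (hs : emb B E s).

Lemma emb0 : s 0 = 0.
Proof.
case: hs => _ hD _; have E0 := sf0 hE.
have h := hD 0 0 E0 E0; rewrite addr0 in h.
by apply: (@addrI _ (s 0)); rewrite addr0 -h.
Qed.
Lemma emb1 : s 1 = 1. Proof. by case: hs => h _ _; apply: h. Qed.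
Lemma embD x y : E x -> E y -> s (x + y) = s x + s y. Proof. by case: hs => _ h _; apply: h. Qed.
Lemma embM x y : E x -> E y -> s (x * y) = s x * s y. Proof. by case: hs => _ _ h; apply: h. Qed.
Lemma embB0 x : B x -> s x = x. Proof. by case: hs => h _ _; apply: h. Qed.
Lemma embN x : E x -> s (- x) = - s x.
Proof.
move=> ex; have enx : E (- x) := sfN hE ex.
by apply/eqP; rewrite -subr_eq0 opprK -embD // addNr emb0.
Qed.
Lemma embB x y : E x -> E y -> s (x - y) = s x - s y.
Proof. by move=> ex ey; rewrite embD ?embN //; exact: (sfN hE). Qed.
Lemma embV x : E x -> s x^-1 = (s x)^-1.
Proof.
move=> ex; have [->|x0] := eqVneq x 0; first by rewrite invr0 emb0 invr0.
have h : s x * s x^-1 = 1 by rewrite -embM ?mulfV ?emb1 //; exact: (sfV hE).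
have sx0 : s x != 0 by apply/eqP => h0; move: h; rewrite h0 mul0r => /eqP; rewrite eq_sym oner_eq0.
by apply: (mulfI sx0); rewrite h mulfV.
Qed.
Lemma emb_inj x y : E x -> E y -> s x = s y -> x = y.
Proof.
move=> ex ey h; apply/eqP; rewrite -subr_eq0; apply/eqP.
have exy : E (x - y) by exact: (sfB hE).
have [//|n0] := eqVneq (x - y) 0.
have : s (x - y) * s (x - y)^-1 = 1 by rewrite -embM ?mulfV ?emb1 //; exact: (sfV hE).
by rewrite embB // h subrr mul0r => /eqP; rewrite eq_sym oner_eq0.
Qed.
Lemma embX x n : E x -> s (x ^+ n) = s x ^+ n.
Proof.
move=> ex; elim: n => [|n IH]; first by rewrite !expr0 emb1.
by rewrite !exprS embM ?IH //; exact: (sfX _ hE).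
Qed.
End EmbTheory.

Lemma emb_monoE B E E' s : (forall x, E' x -> E x) -> emb B E s -> emb B E' s.
Proof. by move=> h [h1 h2 h3]; split => // x y /h ? /h ?; [apply: h2|apply: h3]. Qed.
Lemma emb_monoB B B' E s : (forall x, B' x -> B x) -> emb B E s -> emb B' E s.
Proof. by move=> h [h1 h2 h3]; split => // x /h; apply: h1. Qed.
Lemma emb_id B E : emb B E id. Proof. by []. Qed.
Lemma emb_comp B E s r : emb B E s -> emb B E r -> (forall x, E x -> E (r x)) ->
  emb B E (s \o r).
Proof.
move=> [s1 s2 s3] [r1 r2 r3] hr; split => /=.
- by move=> x bx; rewrite r1 // s1.
- by move=> x y ex ey; rewrite r2 // s2 //; apply: hr.
- by move=> x y ex ey; rewrite r3 // s3 //; apply: hr.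
Qed.

Lemma emb_pre B E s X Y : is_subfield E -> B 1 -> emb B E s -> is_subfield X ->
  (forall x, X x -> E x) -> is_subfield Y -> is_subfield (fun x => X x /\ Y (s x)).
Proof.
move=> hE hB1 hs hX hXE hY; split.
- by split; [apply: sf0 | rewrite (emb0 hE hs); apply: sf0].
- by split; [apply: sf1 | rewrite (emb1 hB1 hs); apply: sf1].
- move=> x y [hx1 hx2] [hy1 hy2]; split; first exact: (sfB hX hx1 hy1).
  by rewrite (embB hE hs (hXE _ hx1) (hXE _ hy1)); apply: (sfB hY).
- move=> x y [hx1 hx2] [hy1 hy2]; split; first exact: (sfM hX hx1 hy1).
  by rewrite (embM hs (hXE _ hx1) (hXE _ hy1)); apply: (sfM hY).
- move=> x [hx1 hx2]; split; first exact: (sfV hX hx1).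
  by rewrite (embV hE hB1 hs (hXE _ hx1)); apply: (sfV hY).
Qed.

Lemma emb_tw_img B E s T zs Y : is_subfield E -> B 1 -> emb B E s -> is_subfield T ->
  (forall x, tw T zs x -> E x) -> is_subfield Y ->
  (forall x, T x -> Y (s x)) -> (forall z, z \in zs -> Y (s z)) ->
  forall x, tw T zs x -> Y (s x).
Proof.
move=> hE hB1 hs hT hTE hY hTY hz x hx.
have hP := emb_pre hE hB1 hs (tw_sub zs hT) hTE hY.
have : (fun x => tw T zs x /\ Y (s x)) x; last by case.
apply: (tw_min hP) hx.
  by move=> y ty; split; [apply: tw_base | apply: hTY].
by move=> z hz'; split; [apply: tw_mem | apply: hz].
Qed.

Lemma rep_uniq K z u v u' v' : is_subfield K -> ~ K z -> K u -> K v -> K u' -> K v' ->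
  u + v * z = u' + v' * z -> u = u' /\ v = v'.
Proof.
move=> hK nz ku kv ku' kv' h.
have hv : v = v'.
  have [//|ne] := eqVneq v v'; exfalso; apply: nz.
  have -> : z = (u' - u) / (v - v').
    apply: (mulIf (_ : v - v' != 0)); first by rewrite subr_eq0.
    rewrite mulfVK ?subr_eq0 //.
    have -> : u' = u + v * z - v' * z by rewrite h addrK.
    ring.
  by apply: sfM => //; [apply: sfB | apply: sfV => //; apply: sfB].
by split => //; move: h; rewrite hv => /addIr.
Qed.

End Tower.

Section Ext.
Variable Om : fieldType.
Implicit Types (K B E S T X Y : Om -> Prop) (x y z : Om).

Lemma ext1 B K s z w : is_subfield K -> (forall x, B x -> K x) -> B 1 -> emb B K s ->
  ~ K z -> K (z * z) -> w * w = s (z * z) ->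
  exists s', [/\ emb B (adjoin K z) s', forall x, K x -> s' x = s x & s' z = w].
Proof.
move=> hK hBK hB1 hs nz hd hw.
pose P x (p : Om * Om) := K p.1 /\ K p.2 /\ x = p.1 + p.2 * z.
pose s' x := s (epsilon (inhabits (0, 0)) (P x)).1 + s (epsilon (inhabits (0, 0)) (P x)).2 * w.
have key u v : K u -> K v -> s' (u + v * z) = s u + s v * w.
  move=> ku kv; rewrite /s'.
  have ex : exists p, P (u + v * z) p by exists (u, v).
  have [k1 [k2 e]] := epsilon_spec (inhabits (0, 0)) _ ex.
  by have [-> ->] := rep_uniq hK nz k1 k2 ku kv (esym e).
have K0 := sf0 hK.
have keyK x : K x -> s' x = s x.
  by move=> kx; have := key x 0 kx K0; rewrite mul0r addr0 (emb0 hK hs) mul0r addr0.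
have rep := adjoin_rep hK hd.
exists s'; split => //; last first.
  by have := key 0 1 K0 (sf1 hK); rewrite mul1r add0r (emb0 hK hs) (emb1 hB1 hs) add0r mul1r.
split.
- by move=> x bx; rewrite (keyK x (hBK x bx)) (embB0 hs).
- move=> x y /rep [u [v [ku kv ->]]] /rep [u' [v' [ku' kv' ->]]].
  have -> : u + v * z + (u' + v' * z) = (u + u') + (v + v') * z by ring.
  have k1 := sfD hK ku ku'; have k2 := sfD hK kv kv'.
  rewrite !key // !(embD hs) //; ring.
- move=> x y /rep [u [v [ku kv ->]]] /rep [u' [v' [ku' kv' ->]]].
  have -> : (u + v * z) * (u' + v' * z) = (u * u' + v * v' * (z * z)) + (u * v' + v * u') * z by ring.
  have kvv := sfM hK kv kv'; have kuu := sfM hK ku ku'.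
  have kuv := sfM hK ku kv'; have kvu := sfM hK kv ku'.
  have kvvd := sfM hK kvv hd.
  have k1 := sfD hK kuu kvvd; have k2 := sfD hK kuv kvu.
  rewrite !key // !(embD hs) // (embM hs kvv hd) (embM hs kv kv') (embM hs ku ku').
  rewrite (embM hs ku kv') (embM hs kv ku') -hw; ring.
Qed.

Lemma adjoin_in K z : is_subfield K -> K z -> forall x, adjoin K z x -> K x.
Proof. by move=> hK kz; apply: adjoin_min. Qed.

End Ext.

Section Main.
Variable Om : fieldType.
Variable F : Om -> Prop.
Hypothesis hF : is_subfield F.
Hypothesis hchar : (2%:R : Om) != 0.
Hypothesis hsq : forall x : Om, exists y, y * y = x.
Implicit Types (K B E S T X Y N : Om -> Prop) (x y z : Om).

Lemma hsqb x : exists y, y * y == x.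
Proof. by have [y h] := hsq x; exists y; apply/eqP. Qed.
Definition sq x := xchoose (hsqb x).
Lemma sqK x : sq x * sq x = x.
Proof. exact: (eqP (xchooseP (hsqb x))). Qed.

Definition pb (P : Prop) : bool := if excluded_middle_informative P then true else false.
Lemma pbP P : reflect P (pb P).
Proof. by rewrite /pb; case: excluded_middle_informative => h; constructor. Qed.

Lemma ext_tw B T zs s : is_subfield T -> (forall x, B x -> T x) -> B 1 -> valid T zs ->
  emb B T s -> exists s', emb B (tw T zs) s' /\ forall x, T x -> s' x = s x.
Proof.
move=> hT hBT hB1; elim: zs => [|z zs IH] /=; first by move=> _ hs; exists s.
case=> v1 hd hs; have [s1 [hs1 a1]] := IH v1 hs.
have hT0 := tw_sub zs hT.
have [kz|nkz] := classic (tw T zs z).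
  exists s1; split => //; apply: emb_monoE hs1; exact: adjoin_in.
have hBT0 x : B x -> tw T zs x by move=> /hBT; apply: tw_base.
have [s' [hs' a' _]] := ext1 hT0 hBT0 hB1 hs1 nkz hd (sqK (s1 (z * z))).
exists s'; split => // x tx; rewrite a' ?a1 //; exact: tw_base.
Qed.

Lemma two_zero x : x + x = 0 -> x = 0.
Proof.
move=> h; have : 2%:R * x = 0 by rewrite mulr_natl mulr2n.
by move/eqP; rewrite mulf_eq0 (negPf hchar) /= => /eqP.
Qed.

Lemma fixed_field B zs c : is_subfield B -> valid B zs -> tw B zs c ->
  (forall s, emb B (tw B zs) s -> s c = c) -> B c.
Proof.
move=> hB; have hB1 := sf1 hB.
elim: zs c => [|z zs IH] c //=; case=> v1 hd hc hfix.
have hT0 := tw_sub zs hB.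
have hBT0 x : B x -> tw B zs x by apply: tw_base.
have [kz|nkz] := classic (tw B zs z).
  apply: IH => //; first exact: adjoin_in hc.
  by move=> s hs; apply: hfix; apply: emb_monoE hs; exact: adjoin_in.
have [u [v [ku kv ec]]] := (adjoin_rep hT0 hd c).1 hc.
have hA := adjoin_sub (tw B zs) z.
have Au : adjoin (tw B zs) z u by exact: adjoin_base.
have Av : adjoin (tw B zs) z v by exact: adjoin_base.
have Az : adjoin (tw B zs) z z by exact: adjoin_z.
have Avz : adjoin (tw B zs) z (v * z) by exact: (sfM hA Av Az).
have val s w : emb B (adjoin (tw B zs) z) s -> (forall x, tw B zs x -> s x = x) -> s z = w ->
    s c = u + v * w.
  by move=> hs hid hz; rewrite ec (embD hs) // (embM hs) // (hid _ ku) (hid _ kv) hz.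
pose w := sq (z * z).
have [sp [hsp ap zp]] := ext1 hT0 hBT0 hB1 (emb_id B (tw B zs)) nkz hd (sqK (z * z)).
have hw' : (- w) * (- w) = id (z * z) by rewrite mulrNN sqK.
have [sm [hsm am zm]] := ext1 hT0 hBT0 hB1 (emb_id B (tw B zs)) nkz hd hw'.
have e1 := val sp w hsp ap zp; have e2 := val sm (- w) hsm am zm.
rewrite hfix // in e1; rewrite hfix // in e2.
have z0 : z != 0 by apply/eqP => z0; apply: nkz; rewrite z0; exact: sf0.
have w0 : w != 0.
  apply/eqP => w0; have : w * w = z * z by rewrite sqK.
  by rewrite w0 mul0r => /esym/eqP; rewrite mulf_eq0 orbb (negPf z0).
have v0 : v = 0.
  have : v * w + v * w = 0.
    have h : u + v * w = u + v * (- w) by rewrite -e1 -e2.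
    by move/addrI: h; rewrite mulrN => h; rewrite {1}h addNr.
  by move/two_zero/eqP; rewrite mulf_eq0 (negPf w0) orbF => /eqP.
have cu : c = u by rewrite ec v0 mul0r addr0.
rewrite cu; apply: IH => // s hs.
have [s' [hs' a' _]] := ext1 hT0 hBT0 hB1 hs nkz hd (sqK (s (z * z))).
by rewrite -a' // -cu hfix.
Qed.


Lemma fin_conj B zs x : is_subfield B -> valid B zs -> tw B zs x ->
  exists l : seq Om, forall s, emb B (tw B zs) s -> s x \in l.
Proof.
move=> hB; elim: zs x => [|z zs IH] x /=.
  by move=> _ bx; exists [:: x] => s hs; rewrite (embB0 hs) // mem_head.
case=> v1 hd hx; have hT0 := tw_sub zs hB.
have [u [v [ku kv ->]]] := (adjoin_rep hT0 hd x).1 hx.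
have [lu hu] := IH u v1 ku; have [lv hv] := IH v v1 kv; have [ld hld] := IH _ v1 hd.
pose lz := map sq ld ++ map (fun e => - sq e) ld.
exists [seq a + bc | a <- lu, bc <- [seq b * c | b <- lv, c <- lz]] => s hs.
have hs0 : emb B (tw B zs) s by apply: emb_monoE hs => y; apply: adjoin_base.
have hA := adjoin_sub (tw B zs) z.
have Au : adjoin (tw B zs) z u by exact: adjoin_base.
have Av : adjoin (tw B zs) z v by exact: adjoin_base.
have Az : adjoin (tw B zs) z z by exact: adjoin_z.
have Avz : adjoin (tw B zs) z (v * z) by exact: (sfM hA Av Az).
rewrite (embD hs) // (embM hs) //.
apply: allpairs_f; first exact: hu.
apply: allpairs_f; first exact: hv.
have hsd : s z * s z = s (z * z) by rewrite (embM hs).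
have hdl : s (z * z) \in ld by apply: hld.
case: (sq_eq (etrans hsd (esym (sqK (s (z * z)))))) => ->; rewrite mem_cat.
  by rewrite (map_f sq hdl).
by rewrite (map_f (fun e => - sq e) hdl) orbT.
Qed.

Definition normal N := forall s, emb F N s -> forall y, N y -> N (s y).

Lemma hF1 : F 1. Proof. exact: sf1 hF. Qed.

Lemma surj zs s y : valid F zs -> normal (tw F zs) -> emb F (tw F zs) s -> tw F zs y ->
  exists y', tw F zs y' /\ s y' = y.
Proof.
move=> vz hn hs hy; set N := tw F zs.
have hN : is_subfield N := tw_sub zs hF.
have [l hl] := fin_conj hF vz hy.
pose P e := exists r, emb F N r /\ r y = e.
pose R := [seq e <- undup l | pb (P e)].
have RP e : e \in R -> P e by rewrite mem_filter => /andP[/pbP].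
have RN e : e \in R -> N e by move/RP => [r [hr <-]]; apply: hn.
have inR e : P e -> e \in R.
  move=> pe; rewrite mem_filter mem_undup; apply/andP; split; first exact/pbP.
  by case: pe => r [hr <-]; apply: hl.
have uR : uniq (map s R).
  rewrite map_inj_in_uniq; first by rewrite filter_uniq // undup_uniq.
  by move=> a b /RN ha /RN hb; apply: (emb_inj hN hF1 hs).
have sR : {subset map s R <= R}.
  move=> e /mapP [e' /RP [r [hr <-]] ->]; apply: inR.
  exists (s \o r); split => //; apply: emb_comp => // x hx; exact: hn.
have [_ eqR] : (size (map s R) = size R) * (map s R =i R).
  by apply: uniq_min_size uR sR _; rewrite size_map.
have : y \in map s R by rewrite eqR; apply: inR; exists id; split => //; exact: emb_id.
by case/mapP => y' /RN hy' ->; exists y'.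
Qed.

Lemma inv_emb zs s : valid F zs -> normal (tw F zs) -> emb F (tw F zs) s ->
  exists r, [/\ emb F (tw F zs) r,
    forall y, tw F zs y -> tw F zs (r y) /\ s (r y) = y &
    forall y, tw F zs y -> r (s y) = y].
Proof.
move=> vz hn hs; set N := tw F zs.
have hN : is_subfield N := tw_sub zs hF.
pose r y := epsilon (inhabits 0) (fun y' => N y' /\ s y' = y).
have hr y : N y -> N (r y) /\ s (r y) = y.
  by move=> ny; apply: (epsilon_spec (inhabits 0) (fun y0 => N y0 /\ s y0 = y)); apply: (surj vz hn hs ny).
have inj := emb_inj hN hF1 hs.
have rs y : N y -> r (s y) = y.
  move=> ny; have [h1 h2] := hr (s y) (hn _ hs _ ny); exact: inj h2.
exists r; split => //; split.
- move=> x fx; have nx : N x by apply: tw_base.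
  by rewrite -{1}(embB0 hs fx) rs.
- move=> x y nx ny; have [rx sx] := hr x nx; have [ry sy] := hr y ny.
  by rewrite -{1}sx -{1}sy -(embD hs) // rs //; apply: sfD.
- move=> x y nx ny; have [rx sx] := hr x nx; have [ry sy] := hr y ny.
  by rewrite -{1}sx -{1}sy -(embM hs) // rs //; apply: sfM.
Qed.

Lemma valid_sqs T (l : seq Om) : is_subfield T -> (forall e, e \in l -> T e) ->
  valid T (map sq l).
Proof.
move=> hT; elim: l => [|e l IH] //= hl; split.
  by apply: IH => e' he'; apply: hl; rewrite inE he' orbT.
by rewrite sqK; apply: tw_base; apply: hl; rewrite mem_head.
Qed.

Lemma normal_closure zs : valid F zs -> exists zs',
  [/\ valid F zs', forall x, tw F zs x -> tw F zs' x & normal (tw F zs')].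
Proof.
elim: zs => [|z zs IH] /=.
  by move=> _; exists [::]; split => // s hs y fy /=; rewrite (embB0 hs).
case=> v1 hd; have [zs' [v' inc hn]] := IH v1.
set N := tw F zs'.
have hN : is_subfield N := tw_sub zs' hF.
have Nd : N (z * z) by apply: inc.
have [l hl] := fin_conj hF v' Nd.
pose P e := exists r, emb F N r /\ r (z * z) = e.
pose E := [seq e <- l | pb (P e)].
have EP e : e \in E -> P e by rewrite mem_filter => /andP[/pbP].
have EN e : e \in E -> N e by move/EP => [r [hr <-]]; apply: hn.
have inE' e : P e -> e \in E.
  move=> pe; rewrite mem_filter; apply/andP; split; first exact/pbP.
  by case: pe => r [hr <-]; apply: hl.
exists (map sq E ++ zs').
have eqT : tw F (map sq E ++ zs') = tw N (map sq E) by rewrite tw_cat.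
have hN' : is_subfield (tw F (map sq E ++ zs')) := tw_sub _ hF.
have NN' x : N x -> tw F (map sq E ++ zs') x by rewrite eqT; apply: tw_base.
have sqN' e : e \in E -> tw F (map sq E ++ zs') (sq e).
  by move=> he; apply: tw_mem; rewrite mem_cat (map_f sq he).
split.
- by apply/valid_cat; split => //; apply: valid_sqs.
- apply: adjoin_min => //; first by move=> x /inc; apply: NN'.
  have dE : z * z \in E by apply: inE'; exists id; split => //; exact: emb_id.
  have h := sqN' _ dE; case: (sq_eq (esym (sqK (z * z)))) => hz; rewrite hz //.
  exact: (sfN hN' h).
- move=> s hs; rewrite eqT in hs *.
  have hsN : emb F N s by apply: emb_monoE hs => x; apply: tw_base.
  apply: (emb_tw_img (tw_sub _ hN) hF1 hs hN _ (tw_sub _ hN)) => //.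
  + by move=> x nx; rewrite -eqT; apply: NN'; apply: hn.
  + move=> z' /mapP [e he ->]; rewrite -eqT.
    have [r [hr re]] := EP e he.
    have hse : s e \in E.
      apply: inE'; exists (s \o r); split; last by rewrite /= re.
      by apply: emb_comp => // x hx; apply: hn.
    have ne : N e := EN e he.
    have h2 : s (sq e) * s (sq e) = sq (s e) * sq (s e).
      have A1 : tw N (map sq E) (sq e) by rewrite -eqT; apply: sqN'.
      by rewrite -(embM hs A1 A1) !sqK.
    case: (sq_eq h2) => ->; first exact: sqN'.
    exact: (sfN hN' (sqN' _ hse)).
Qed.

Lemma nc_ext t zs1 zs2 s : F (t * t) -> valid F zs1 -> valid F zs2 -> emb F (tw F zs1) s ->
  exists zsN, [/\ valid F zsN, normal (tw F zsN), (forall x, tw F zs1 x -> tw F zsN x),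
    (forall x, tw F zs2 x -> tw F zsN x) &
    (forall x, adjoin F t x -> tw F zsN x) /\
    exists s', emb F (tw F zsN) s' /\ forall x, tw F zs1 x -> s' x = s x].
Proof.
move=> ht v1 v2 hs.
have hT1 := tw_sub zs1 hF.
have Ft x : F x -> tw F (t :: zs1) x by move=> fx; apply: tw_base.
have vz : valid F (zs2 ++ t :: zs1).
  apply/valid_cat; split; first exact: valid_monoB v2.
  by split => //; apply: tw_base.
have [zsN [vN incN hn]] := normal_closure vz.
have i1 x : tw F (t :: zs1) x -> tw F zsN x by move=> h; apply: incN; apply: tw_catl.
exists zsN; split => //.
- by move=> x h; apply: i1; apply: adjoin_base.
- by move=> x h; apply: incN; rewrite tw_cat; apply: tw_monoB h.
split.
  by move=> x h; apply: i1; apply: gen_mono h => y [fy|->]; [left; apply: tw_base|right].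
have vN' : valid (tw F zs1) zsN by apply: valid_monoB vN => x; apply: tw_base.
have [s' [hs' a']] := ext_tw hT1 (fun x => @tw_base _ F zs1 x) hF1 vN' hs.
exists s'; split => //; apply: emb_monoE hs'; apply: tw_monoB => x; apply: tw_base.
Qed.

Lemma emb_big B E s (I : Type) (r : seq I) (P : pred I) (f : I -> Om) :
  is_subfield E -> emb B E s -> (forall i, E (f i)) ->
  E (\sum_(i <- r | P i) f i) /\ s (\sum_(i <- r | P i) f i) = \sum_(i <- r | P i) s (f i).
Proof.
move=> hE hs hf.
apply: (big_ind2 (fun a b => E a /\ s a = b)).
- by split; [apply: sf0 | apply: (emb0 hE hs)].
- by move=> a1 a2 b1 b2 [ea <-] [eb <-]; split; [apply: sfD | rewrite (embD hs)].
- by move=> i _; split.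
Qed.

Lemma emb_horner B E s (p : {poly Om}) x : is_subfield E -> B 1 -> emb B E s ->
  (forall i, E p`_i) -> (forall i, s p`_i = p`_i) -> E x -> s p.[x] = p.[s x].
Proof.
move=> hE hB1 hs hp hfix hx; rewrite !horner_coef.
have hf i : E ((fun i : 'I_(size p) => p`_i * x ^+ i) i) by apply: sfM => //; apply: sfX.
have [_ ->] := emb_big (index_enum _) xpredT hE hs hf.
by apply: eq_bigr => i _; rewrite (embM hs) ?(embX hE hB1 hs) ?hfix //; apply: sfX.
Qed.

Lemma emb_horner_in E (p : {poly Om}) x : is_subfield E -> (forall i, E p`_i) -> E x -> E p.[x].
Proof.
move=> hE hp hx; rewrite horner_coef.
have hf i : E ((fun i : 'I_(size p) => p`_i * x ^+ i) i) by apply: sfM => //; apply: sfX.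
by have [] := emb_big (index_enum _) xpredT hE (emb_id E E) hf.
Qed.

Lemma emb_prodcoef B E s (l : seq Om) : is_subfield E -> B 1 -> emb B E s -> (forall r, r \in l -> E r) ->
  forall i, E (\prod_(r <- l) ('X - r%:P))`_i /\
    s (\prod_(r <- l) ('X - r%:P))`_i = (\prod_(r <- map s l) ('X - r%:P))`_i.
Proof.
move=> hE hB1 hs; elim: l => [|a l IH] hl i.
  rewrite /= !big_nil coefC; case: (i == 0)%N.
    by split; [apply: sf1 | apply: (emb1 hB1 hs)].
  by split; [apply: sf0 | apply: (emb0 hE hs)].
have hl' r : r \in l -> E r by move=> h; apply: hl; rewrite inE h orbT.
have ea : E a by apply: hl; rewrite mem_head.
rewrite /= !big_cons !mulrBl !coefB !coefXM !coefCM.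
have [e1 s1] := IH hl' i; have [e2 s2] := IH hl' i.-1.
have em := sfM hE ea e1.
case: (i == 0)%N.
  split; first exact: (sfB hE (sf0 hE) em).
  by rewrite (embB hE hs (sf0 hE) em) (emb0 hE hs) (embM hs ea e1) s1.
split; first exact: (sfB hE e2 em).
by rewrite (embB hE hs e2 em) (embM hs ea e1) s1 s2.
Qed.

Lemma minpoly_ex K zs x : is_subfield K -> valid K zs ->
  (forall s, emb K (tw K zs) s -> forall y, tw K zs y -> tw K zs (s y)) -> tw K zs x ->
  exists rs : seq Om, [/\ uniq rs,
    (forall r, r \in rs -> exists s, emb K (tw K zs) s /\ r = s x),
    (forall s, emb K (tw K zs) s -> s x \in rs) &
    is_minpoly K x (\prod_(r <- rs) ('X - r%:P))].
Proof.
move=> hK vz hn hx; set N := tw K zs.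
have hN : is_subfield N := tw_sub zs hK.
have hK1 := sf1 hK.
have [l hl] := fin_conj hK vz hx.
pose P e := exists s, emb K N s /\ e = s x.
pose rs := [seq e <- undup l | pb (P e)].
have RP e : e \in rs -> P e by rewrite mem_filter => /andP[/pbP].
have RN e : e \in rs -> N e by move/RP => [r [hr ->]]; apply: hn.
have inR s : emb K N s -> s x \in rs.
  move=> hs; rewrite mem_filter mem_undup; apply/andP; split; last exact: hl.
  by apply/pbP; exists s.
have uR : uniq rs by rewrite filter_uniq // undup_uniq.
exists rs; split => //.
have permR s : emb K N s -> perm_eq (map s rs) rs.
  move=> hs.
  have uR' : uniq (map s rs).
    rewrite map_inj_in_uniq //.
    by move=> a b /RN ha /RN hb; apply: (emb_inj hN hK1 hs).
  have sR : {subset map s rs <= rs}.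
    move=> e /mapP [e' /RP [r [hr ->]] ->].
    have -> : s (r x) = (s \o r) x by [].
    apply: inR; apply: emb_comp => // y hy; exact: hn.
  have [_ eqR] : (size (map s rs) = size rs) * (map s rs =i rs).
    by apply: uniq_min_size uR' sR _; rewrite size_map.
  exact: uniq_perm.
have hroot (q : {poly Om}) : (forall i, K q`_i) -> root q x -> forall r, r \in rs -> root q r.
  move=> hq rq r /RP [s [hs ->]].
  have Nq i : N q`_i by apply: tw_base.
  have Nx : N x := hx.
  rewrite /root -(emb_horner hN hK1 hs Nq) //; last by move=> i; rewrite (embB0 hs).
  by move/eqP: rq => ->; rewrite (emb0 hN hs).
split.
- exact: monic_prod_XsubC.
- move=> i; apply: (fixed_field hK vz); first by have [] := emb_prodcoef hN hK1 (emb_id K N) RN i.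
  move=> s hs; have [_ ->] := emb_prodcoef hN hK1 hs RN i.
  by rewrite (perm_big _ (permR s hs)).
- by rewrite root_prod_XsubC; have := inR id (emb_id K N).
- move=> q hq q0 rq; rewrite size_prod_XsubC.
  apply: max_poly_roots => //; apply/allP => r hr; exact: hroot.
Qed.

Variable t : Om.
Hypothesis ht : F (t * t).
Let L := adjoin F t.

Definition InTw x := exists zs, valid F zs /\ tw F zs x.
Definition Stab (P : Om -> Prop) x :=
  InTw x /\ forall zs s, valid F zs -> tw F zs x -> emb F (tw F zs) s -> P (s x).

Lemma InTw2 x y : InTw x -> InTw y -> exists zs, [/\ valid F zs, tw F zs x & tw F zs y].
Proof.
move=> [zs1 [v1 h1]] [zs2 [v2 h2]]; exists (zs1 ++ zs2); split.
- apply/valid_cat; split => //; apply: valid_monoB v1 => z; exact: tw_base.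
- by rewrite tw_cat; apply: tw_monoB h1 => z; apply: tw_base.
- exact: tw_catl.
Qed.

Lemma InTw_sub : is_subfield InTw.
Proof.
split.
- by exists [::]; split => //; apply: sf0.
- by exists [::]; split => //; apply: sf1.
- move=> x y hx hy; have [zs [v hx' hy']] := InTw2 hx hy.
  by exists zs; split => //; apply: (sfB (tw_sub zs hF)).
- move=> x y hx hy; have [zs [v hx' hy']] := InTw2 hx hy.
  by exists zs; split => //; apply: (sfM (tw_sub zs hF)).
- by move=> x [zs [v hx]]; exists zs; split => //; apply: (sfV (tw_sub zs hF)).
Qed.

Lemma InTw_sq r : InTw (r * r) -> InTw r.
Proof. by move=> [zs [v h]]; exists (r :: zs); split => //; apply: adjoin_z. Qed.

Lemma InTw_list (l : seq Om) : (forall e, e \in l -> InTw e) ->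
  exists zs, valid F zs /\ forall e, e \in l -> tw F zs e.
Proof.
elim: l => [|e l IH] hl; first by exists [::].
have [zs [v h]] := IH (fun e' he' => hl e' (@mem_behead _ (e :: l) e' he')).
have [zs' [v' he]] := hl e (mem_head _ _).
exists (zs' ++ zs); split.
  by apply/valid_cat; split => //; apply: valid_monoB v' => z; exact: tw_base.
move=> e'; rewrite inE => /orP[/eqP->|/h he'].
  by rewrite tw_cat; apply: tw_monoB he => z; apply: tw_base.
exact: tw_catl.
Qed.

Lemma ext_cover zs zs2 s : valid F zs -> valid F zs2 -> emb F (tw F zs) s ->
  exists s', [/\ valid F (zs2 ++ zs), emb F (tw F (zs2 ++ zs)) s',
    forall x, tw F zs x -> tw F (zs2 ++ zs) x &
    forall x, tw F zs x -> s' x = s x].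
Proof.
move=> v v2 hs.
have v2' : valid (tw F zs) zs2 by apply: valid_monoB v2 => z; exact: tw_base.
have [s' [hs' a']] := ext_tw (tw_sub zs hF) (fun x => @tw_base _ F zs x) hF1 v2' hs.
exists s'; rewrite tw_cat; split => //; first by apply/valid_cat.
by move=> x; apply: tw_base.
Qed.

Lemma cover2 x y zs s : InTw x -> InTw y -> valid F zs -> emb F (tw F zs) s ->
  exists zs' s', [/\ valid F zs', emb F (tw F zs') s', tw F zs' x, tw F zs' y &
    forall w, tw F zs w -> tw F zs' w /\ s' w = s w].
Proof.
move=> ix iy v hs; have [zs2 [v2 tx ty]] := InTw2 ix iy.
have [s' [v' hs' inc a']] := ext_cover v v2 hs.
exists (zs2 ++ zs), s'; split => //.
- by rewrite tw_cat; apply: tw_monoB tx => z; apply: tw_base.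
- by rewrite tw_cat; apply: tw_monoB ty => z; apply: tw_base.
- by move=> w hw; split; [apply: inc | apply: a'].
Qed.

Lemma Stab_sub P : is_subfield P -> is_subfield (Stab P).
Proof.
move=> hP; split.
- split; first exact: (sf0 InTw_sub).
  by move=> zs s v _ hs; rewrite (emb0 (tw_sub zs hF) hs); apply: sf0.
- split; first exact: (sf1 InTw_sub).
  by move=> zs s v _ hs; rewrite (emb1 hF1 hs); apply: sf1.
- move=> x y [ix hx] [iy hy]; split; first exact: (sfB InTw_sub).
  move=> zs s v hxy hs.
  have [zs' [s' [v' hs' tx ty a']]] := cover2 ix iy v hs.
  have [_ <-] := a' _ hxy.
  by rewrite (embB (tw_sub zs' hF) hs' tx ty); apply: (sfB hP); [apply: (hx zs' s') | apply: (hy zs' s')].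
- move=> x y [ix hx] [iy hy]; split; first exact: (sfM InTw_sub).
  move=> zs s v hxy hs.
  have [zs' [s' [v' hs' tx ty a']]] := cover2 ix iy v hs.
  have [_ <-] := a' _ hxy.
  by rewrite (embM hs' tx ty); apply: (sfM hP); [apply: (hx zs' s') | apply: (hy zs' s')].
- move=> x [ix hx]; split; first exact: (sfV InTw_sub).
  move=> zs s v hxy hs.
  have [zs' [s' [v' hs' tx _ a']]] := cover2 ix ix v hs.
  have [_ <-] := a' _ hxy.
  by rewrite (embV (tw_sub zs' hF) hF1 hs' tx); apply: (sfV hP); apply: (hx zs' s').
Qed.

Lemma Stab_mono (P P' : Om -> Prop) x : (forall y, P y -> P' y) -> Stab P x -> Stab P' x.
Proof. by move=> h [ix hx]; split => // zs s v tx hs; apply: h; apply: (hx zs s). Qed.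

Definition goodK K := [/\ is_subfield K, (forall x, F x -> K x), (forall x, K x -> L x) &
  (forall x, K x -> Stab K x)].

Lemma higher_sub K n : is_subfield K -> is_subfield (higher K n).
Proof. by case: n => [|n] //= _; apply: gen_sub. Qed.
Lemma higher_S K n x : higher K n x -> higher K n.+1 x.
Proof. by move=> h; apply: gen_incl; left. Qed.
Lemma higher_base K n x : K x -> higher K n x.
Proof. by elim: n => [|n IH] // /IH; apply: higher_S. Qed.

Lemma tw_merge zs1 zs2 : valid F zs1 -> valid F zs2 ->
  [/\ valid F (zs1 ++ zs2), forall x, tw F zs1 x -> tw F (zs1 ++ zs2) x &
      forall x, tw F zs2 x -> tw F (zs1 ++ zs2) x].
Proof.
move=> v1 v2; split.
- apply/valid_cat; split => //; apply: valid_monoB v1 => z; exact: tw_base.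
- by move=> x h; rewrite tw_cat; apply: tw_monoB h => z; apply: tw_base.
- by move=> x; apply: tw_catl.
Qed.

Lemma cover_list (Q : Om -> Om -> Om -> Prop) (l : seq Om) :
  (forall e, e \in l -> exists a b, [/\ Q e a b, InTw a & InTw b]) ->
  exists zs, valid F zs /\ forall e, e \in l -> exists a b, [/\ Q e a b, tw F zs a & tw F zs b].
Proof.
elim: l => [|e l IH] hl; first by exists [::].
have [zs [v h]] := IH (fun e' he' => hl e' (@mem_behead _ (e :: l) e' he')).
have [a [b [q ia ib]]] := hl e (mem_head _ _).
have [zs' [v' ta tb]] := InTw2 ia ib.
have [vm i1 i2] := tw_merge v' v.
exists (zs' ++ zs); split => // e'; rewrite inE => /orP[/eqP->|/h [a' [b' [q' ta' tb']]]].
  by exists a, b; split => //; apply: i1.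
by exists a', b'; split => //; apply: i2.
Qed.

Lemma twK_eq K zs : is_subfield K -> (forall x, F x -> K x) -> (forall x, K x -> tw F zs x) ->
  forall x, tw K zs x <-> tw F zs x.
Proof.
move=> hK FK Kin x; split; last exact: tw_monoB.
apply: tw_min => //; [exact: tw_sub | exact: tw_mem].
Qed.

Lemma galM K n M zsN s1 r : goodK K -> (forall x, higher K n x -> Stab (higher K n) x) ->
  valid F zsN -> normal (tw F zsN) -> (forall x, L x -> tw F zsN x) -> emb F (tw F zsN) s1 ->
  tw F zsN r -> higher K n (r * r) -> is_subfield M -> (forall x, higher K n x -> M x) -> M r ->
  (forall z, M z -> exists a b, [/\ higher K n a, higher K n b & z = a + b * r]) ->
  galois_ext K M -> galois_ext K (adjoin (higher K n) (s1 r)).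
Proof.
move=> [hK FK KL KS] IH vN hnN LN hs1 Nr Kd hM KnM Mr repM [_ _ _ galM].
set Kn := higher K n; have hKn : is_subfield Kn := higher_sub n hK.
have hNN := tw_sub zsN hF.
have Ks1d : Kn (s1 r * s1 r).
  rewrite -(embM hs1 Nr Nr); apply: (proj2 (IH _ Kd) zsN s1 vN _ hs1).
  exact: (sfM hNN Nr Nr).
split; first exact: hK.
- exact: adjoin_sub.
- by move=> x kx; apply: adjoin_base; apply: higher_base.
move=> z hz; have [u [v [ku kv ->]]] := (adjoin_rep hKn Ks1d z).1 hz.
have [iu _] := IH u ku; have [iv _] := IH v kv.
have [zs2 [v2 tu tv]] := InTw2 iu iv.
have [zsN2 [vN2 hn2 i12 i22 [LN2 [s2 [hs2 a2]]]]] := nc_ext ht vN v2 hs1.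
have [ip [hip ips sip]] := inv_emb vN2 hn2 hs2.
have hN2 := tw_sub zsN2 hF.
have Nu : tw F zsN2 u by apply: i22.
have Nv : tw F zsN2 v by apply: i22.
have Nr2 : tw F zsN2 r by apply: i12.
have [Nu0 su0] := ips u Nu; have [Nv0 sv0] := ips v Nv.
have Ku0 : Kn (ip u) := proj2 (IH u ku) zsN2 ip vN2 Nu hip.
have Kv0 : Kn (ip v) := proj2 (IH v kv) zsN2 ip vN2 Nv hip.
pose z0 := ip u + ip v * r.
have Mz0 : M z0 := sfD hM (KnM _ Ku0) (sfM hM (KnM _ Kv0) Mr).
have Nvr : tw F zsN2 (ip v * r) := sfM hN2 Nv0 Nr2.
have Nz0 : tw F zsN2 z0 := sfD hN2 Nu0 Nvr.
have sz0 : s2 z0 = u + v * s1 r.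
  by rewrite /z0 (embD hs2 Nu0 Nvr) (embM hs2 Nv0 Nr2) su0 sv0 (a2 r Nr).
have [p0 [[mon0 cK0 root0 min0] [rs0 [u0 rsM e0]]]] := galM z0 Mz0.
have hab : forall e, e \in rs0 -> exists a b,
    [/\ (fun e a b => [/\ Kn a, Kn b & e = a + b * r]) e a b, InTw a & InTw b].
  move=> e /rsM /repM [a [b [ka kb ->]]]; exists a, b; split => //.
    exact: (proj1 (IH a ka)).
  exact: (proj1 (IH b kb)).
have [zs3 [v3 h3]] := cover_list hab.
have [zsN3 [vN3 hn3 i23 i33 [LN3 [s3 [hs3 a3]]]]] := nc_ext ht vN2 v3 hs2.
have [ip3 [hip3 ips3 sip3]] := inv_emb vN3 hn3 hs3.
set N3 := tw F zsN3.
have hN3 : is_subfield N3 := tw_sub zsN3 hF.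
have KN3 x : K x -> N3 x by move=> kx; apply: LN3; apply: KL.
have eqK := twK_eq hK FK KN3.
have vK : valid K zsN3 by apply: valid_monoB vN3.
have embFK s : emb K (tw K zsN3) s -> emb F N3 s.
  by move=> hs; apply: (emb_monoB FK); apply: emb_monoE hs => x /eqK.
have nK : forall s, emb K (tw K zsN3) s -> forall y, tw K zsN3 y -> tw K zsN3 (s y).
  by move=> s hs y /eqK hy; apply/eqK; apply: hn3 (embFK s hs) y hy.
have Ns1r : N3 (s1 r) by apply: i23; apply: i12; apply: hnN.
have Nz : N3 (u + v * s1 r).
  by apply: sfD hN3 (i23 _ Nu) (sfM hN3 (i23 _ Nv) Ns1r).
have [rs [urs hrs _ hmin]] := minpoly_ex hK vK nK (proj2 (eqK _) Nz).
exists (\prod_(r0 <- rs) ('X - r0%:P)); split => //; exists rs; split => //.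
move=> rho /hrs [sg [hsg ->]].
have hsgF := embFK sg hsg.
have s3N y : N3 y -> N3 (s3 y) by apply: hn3.
have sgN y : N3 y -> N3 (sg y) by apply: hn3.
pose rh := ip3 \o (sg \o s3).
have hrhF : emb F N3 rh.
  apply: emb_comp => //; last by move=> y hy; apply: sgN; apply: s3N.
  exact: emb_comp.
have rhK k : K k -> rh k = k.
  move=> kk; have Nk := KN3 _ kk.
  have ks3 : K (s3 k) := proj2 (KS k kk) zsN3 s3 vN3 Nk hs3.
  rewrite /rh /=; case: hsg => fixsg _ _; rewrite fixsg //; exact: sip3.
have hrh : emb K N3 rh by case: hrhF => _ g2 g3; split.
have Nz03 : N3 z0 by apply: i23.
have rt : root p0 (rh z0).
  have cN i : N3 p0`_i by apply: KN3.
  rewrite /root -(emb_horner hN3 (sf1 hK) hrh cN) //; last by move=> i; apply: rhK.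
  by move/eqP: root0 => ->; rewrite (emb0 hN3 hrhF).
move: rt; rewrite e0 root_prod_XsubC => /h3 [a [b [[ka kb eab] ta tb]]].
have Na : N3 a by apply: i33. 
have Nb : N3 b by apply: i33.
have Nr3 : N3 r by apply: i23.
have e1 : sg (u + v * s1 r) = s3 (rh z0).
  rewrite /rh /= -sz0 -(a3 _ Nz0); rewrite (proj2 (ips3 _ _)) //.
  by apply: sgN; apply: s3N.
rewrite e1 eab (embD hs3 Na (sfM hN3 Nb Nr3)) (embM hs3 Nb Nr3) (a3 _ Nr2) (a2 _ Nr).
apply/(adjoin_rep hKn Ks1d); exists (s3 a), (s3 b); split => //.
  exact: (proj2 (IH a ka) zsN3 s3 vN3 Na hs3).
exact: (proj2 (IH b kb) zsN3 s3 vN3 Nb hs3).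
Qed.

Lemma Stab_higher K : goodK K -> forall n x, higher K n x -> Stab (higher K n) x.
Proof.
move=> gK; have [hK FK KL KS] := gK.
elim=> [|n IH] x; first exact: KS.
set Kn := higher K n; have hKn : is_subfield Kn := higher_sub n hK.
have hKn1 : is_subfield (higher K n.+1) := higher_sub n.+1 hK.
move=> hx; apply: (gen_min (Stab_sub hKn1)) hx => y.
case=> [ky | [M [qM gM My]]].
  by apply: (Stab_mono (P := Kn)); [move=> w; apply: higher_S | apply: IH].
case: qM => hM KnM [y0 [My0 nKy0 repy]].
pose h := (2%:R : Om)^-1.
have Kh : Kn h by apply: sfV => //; apply: sfn.
have h2 : h + h = 1 by rewrite -mulr2n -mulr_natr mulVf.
have [al [be [kal kbe e2]]] := repy (y0 * y0) (sfM hM My0 My0).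
pose r := y0 - be * h.
have err : r * r = al + be * be * (h * h).
  have -> : r * r = y0 * y0 - be * y0 * (h + h) + be * be * (h * h) by rewrite /r; ring.
  by rewrite h2 e2; ring.
have Kd : Kn (r * r) by rewrite err; apply: sfD => //; do 2 apply: sfM => //.
have Mr : M r by apply: sfB => //; apply: KnM; apply: sfM.
have repM z : M z -> exists a b, [/\ Kn a, Kn b & z = a + b * r].
  move=> /repy [u [v [ku kv ->]]]; exists (u + v * (be * h)), v; split => //.
    by apply: sfD => //; do 2 apply: sfM => //.
  by rewrite /r; ring.
have [a [b [ka kb ey]]] := repM y My.
have ia := proj1 (IH a ka); have ib := proj1 (IH b kb).
have ir : InTw r by apply: InTw_sq; exact: (proj1 (IH _ Kd)).
split.
  by rewrite ey; apply: (sfD InTw_sub) => //; apply: (sfM InTw_sub).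
move=> zs s v ty hs.
have [zs2 [v2 h2l]] : exists zs, valid F zs /\ forall e, e \in [:: a; b; r] -> tw F zs e.
  by apply: InTw_list => e; rewrite !inE => /orP[/eqP->|/orP[/eqP->|/eqP->]].
have [zsN [vN hnN i1 i2 [LN [s1 [hs1 a1]]]]] := nc_ext ht v v2 hs.
have hNN := tw_sub zsN hF.
have Na : tw F zsN a by apply: i2; apply: h2l; rewrite !inE eqxx.
have Nb : tw F zsN b by apply: i2; apply: h2l; rewrite !inE eqxx orbT.
have Nr : tw F zsN r by apply: i2; apply: h2l; rewrite !inE eqxx !orbT.
rewrite -(a1 _ ty) ey (embD hs1 Na (sfM hNN Nb Nr)) (embM hs1 Nb Nr).
have Ka1 : Kn (s1 a) := proj2 (IH a ka) zsN s1 vN Na hs1.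
have Kb1 : Kn (s1 b) := proj2 (IH b kb) zsN s1 vN Nb hs1.
have Kr1 : higher K n.+1 (s1 r).
  have [kr|nkr] := classic (Kn (s1 r)); first exact: higher_S.
  have Ks1d : Kn (s1 r * s1 r).
    by rewrite -(embM hs1 Nr Nr); apply: (proj2 (IH _ Kd) zsN s1 vN _ hs1); apply: sfM.
  apply: gen_incl; right; exists (adjoin Kn (s1 r)); split; last exact: adjoin_z.
    split; [exact: adjoin_sub | by move=> w; apply: adjoin_base |].
    by exists (s1 r); split => //; [exact: adjoin_z | move=> w /(adjoin_rep hKn Ks1d w)].
  exact: (galM gK IH vN hnN LN hs1 Nr Kd hM KnM Mr repM gM).
apply: (sfD hKn1); first exact: higher_S.
by apply: (sfM hKn1) => //; apply: higher_S.
Qed.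

Lemma goodF : goodK F.
Proof.
split => //; first by move=> x; apply: adjoin_base.
move=> x fx; split; first by exists [::].
by move=> zs s _ _ hs; rewrite (embB0 hs).
Qed.

Lemma goodL : goodK L.
Proof.
have hL : is_subfield L by apply: adjoin_sub.
split => //; first by move=> x; apply: adjoin_base.
apply: (gen_min (Stab_sub hL)) => y [fy|->].
  split; first by exists [::].
  by move=> zs s _ _ hs; rewrite (embB0 hs) //; apply: adjoin_base.
split; first by exists [:: t]; split => //; apply: adjoin_z.
move=> zs s v tt hs.
have e : s t * s t = t * t.
  by rewrite -(embM hs tt tt) (embB0 hs).
case: (sq_eq e) => ->; first exact: adjoin_z.
have Lt : L t by apply: adjoin_z.
exact: (sfN hL Lt).
Qed.

Lemma final : galois_ext F (fun x => higher F 3 x /\ higher L 2 x).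
Proof.
have hL : is_subfield L by apply: adjoin_sub.
split => //.
- by apply: sfI; apply: higher_sub.
- by move=> x fx; split; apply: higher_base => //; apply: adjoin_base.
move=> x [h1 h2].
have S1 := Stab_higher goodF h1; have S2 := Stab_higher goodL h2.
have [zs [vz tz]] := proj1 S1.
have [zsN [vN inc hn]] := normal_closure vz.
have [rs [urs hrs _ hmin]] := minpoly_ex hF vN hn (inc _ tz).
exists (\prod_(r0 <- rs) ('X - r0%:P)); split => //; exists rs; split => //.
move=> r /hrs [sg [hsg ->]]; split.
  exact: (proj2 S1 zsN sg vN (inc _ tz) hsg).
exact: (proj2 S2 zsN sg vN (inc _ tz) hsg).
Qed.

End Main.

Theorem lemma4 (Om : fieldType) (F : Om -> Prop)
  (hF : is_subfield F) (hchar : (2%:R : Om) != 0)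
  (hOm : is_quadratic_closure F)
  (a : Om) (Fa : F a) (a0 : a != 0)
  (nsq : ~ (exists b, F b /\ b * b = a))
  (s : Om) (hs : s * s = a) :
  galois_ext F (fun x => higher F 3 x /\ higher (adjoin F s) 2 x).
Proof.
have ht : F (s * s) by rewrite hs.
exact: (final hF hchar (proj1 hOm) ht).
Qed.
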